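(* Let $G$ be a $1$-tuple regular finite group, let $N$ be a subgroup of $G$ that is a union of order classes, set $\bar G=G/N$, and let $a,b\in\bar G$ be elements of the same order. Then (i) there exist preimages $g_a,g_b\in G$ of $a$ and $b$, respectively, with the same order; and (ii) the conjugacy classes of $a$ and $b$ in $\bar G$ have the same size.
   Context: A subgroup $N$ of $G$ is a union of order classes if for every $n\in\mathbb{N}$ it contains either all or none of the elements of order $n$ of $G$ (such $N$ is normal). A finite group $G$ is $1$-tuple regular if for all $g_1,h_1\in G$ of the same order there is a bijection $\Psi\colon G\to G$ such that for every $g\in G$ the assignment $g_1\mapsto h_1, g\mapsto\Psi(g)$ defines an isomorphism $\langle g_1,g\rangle\to\langle h_1,\Psi(g)\rangle$. *)

(* Defs.v *)
From mathcomp Require Import all_boot all_fingroup.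
Set Implicit Arguments. Unset Strict Implicit. Unset Printing Implicit Defensive.
Local Open Scope group_scope.

(* The finite group G of the paper is the whole finGroupType gT. *)

Definition union_of_order_classes (gT : finGroupType) (N : {set gT}) : Prop :=
  forall x y : gT, #[x] = #[y] -> (x \in N) = (y \in N).

Definition one_tuple_regular (gT : finGroupType) : Prop :=
  forall g1 h1 : gT, #[g1] = #[h1] ->
    exists Psi : gT -> gT, bijective Psi /\
      forall g : gT,
        exists f : {morphism <<[set g1; g]>> >-> gT},
          [/\ isom <<[set g1; g]>> <<[set h1; Psi g]>> f,
              f g1 = h1 & f g = Psi g].

(* Main.v *)
Require Import Defs.
From mathcomp Require Import all_boot all_fingroup all_solvable.

Local Open Scope group_scope.

Section S.
Variables (gT : finGroupType) (N : {group gT}).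
Hypothesis hN : union_of_order_classes N.

Lemma normN : 'N(N) = setT.
Proof.
apply/eqP; rewrite eqEsubset subsetT /=; apply/subsetP => g _.
apply/normP; apply/eqP; rewrite eqEcard cardJg leqnn andbT.
apply/subsetP => y; rewrite mem_conjg => H.
by rewrite -(hN (y ^ g^-1) y) // orderJ.
Qed.

Lemma inNN g : g \in 'N(N).
Proof. by rewrite normN inE. Qed.

Lemma cosetX1 g k : (coset N g ^+ k == 1) = (g ^+ k \in N).
Proof.
rewrite -morphX ?inNN //; apply/eqP/idP => [|H]; last exact: coset_id.
by apply: coset_idr; rewrite inNN.
Qed.

Lemma L1 g h : #[g] = #[h] -> #[coset N g] = #[coset N h].
Proof.
move=> E.
have key k : (coset N g ^+ k == 1) = (coset N h ^+ k == 1).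
  by rewrite !cosetX1 (hN (g ^+ k) (h ^+ k)) // !orderXgcd E.
apply/eqP; rewrite eqn_dvd; apply/andP; split.
  by rewrite order_dvdn key expg_order.
by rewrite order_dvdn -key expg_order.
Qed.

Lemma pcmp p u v : prime p -> p.-elt u -> p.-elt v -> #[u] %| #[v] ->
  #[coset N u] = #[coset N v] -> p %| #[coset N u] -> #[u] = #[v].
Proof.
move=> pp pu pv duv E pm.
set c := #[v] %/ #[u].
have Ev : #[v] = (c * #[u])%N by rewrite /c divnK.
have Hvc : #[v ^+ c] = #[u].
  by rewrite orderXgcd Ev gcdnC gcdnMr mulKn // lt0n; apply/eqP => c0; move: Ev; rewrite c0 mul0n => /eqP; rewrite eqn0Ngt order_gt0.
have := L1 _ _ (esym Hvc); rewrite morphX ?inNN // orderXgcd -E => E2.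
have m0 : 0 < #[coset N u] by [].
have g1 : gcdn #[coset N u] c = 1%N.
  apply/eqP; rewrite eqn_leq gcdn_gt0 m0 andbT leqNgt; apply/negP => g1.
  move: (ltn_Pdiv g1 m0). by rewrite -E2 ltnn.
have pc : p.-nat c by apply: (pnat_dvd _ pv); rewrite Ev dvdn_mulr.
have c1 : c = 1%N.
  have ce : c = (p ^ logn p c)%N by rewrite -p_part part_pnat_id.
  case: (posnP (logn p c)) => [l0|lp]; first by rewrite ce l0.
  have : p %| gcdn #[coset N u] c.
    by rewrite dvdn_gcd pm /= ce dvdn_exp.
  by rewrite g1 dvdn1 => /eqP p1; move: pp; rewrite p1.
by rewrite Ev c1 mul1n.
Qed.
Lemma keyC ga g : ([~ ga, g] \in N) = (coset N g \in 'C[coset N ga]).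
Proof.
have := cosetX1 [~ ga, g] 1; rewrite !expg1 => <-.
rewrite morphR ?inNN //.
by apply/commgP/cent1P => H; apply: esym.
Qed.

Lemma csize ga : #|coset N ga ^: ([set: gT] / N)| =
   #|[set: gT] / N| %/ (#|[set g | [~ ga, g] \in N]| %/ #|N|).
Proof.
rewrite -index_cent1 -divgS ?subsetIl //; congr (_ %/ _).
have sub : 'C_([set: gT] / N)[coset N ga] \subset coset N @* 'N(N).
  by rewrite -quotientE im_quotient subsetT.
have E := card_morphpre sub; rewrite ker_coset in E.
transitivity ((#|N| * #|'C_([set: gT] / N)[coset N ga]|) %/ #|N|)%N.
  by rewrite mulKn.
rewrite -E; congr (_ %/ _); apply: eq_card => g.
rewrite [in RHS]inE keyC.
apply/idP/idP => [/morphpreP [_ H]|H].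
  by move: H; rewrite inE => /andP [].
apply: mem_morphpre; first exact: inNN.
rewrite inE H andbT.
by apply: mem_quotient; rewrite inE.
Qed.

Lemma cnt ga gb : one_tuple_regular gT -> #[ga] = #[gb] ->
  #|[set g | [~ ga, g] \in N]| = #|[set g | [~ gb, g] \in N]|.
Proof.
move=> hG E; have [Psi [[Phi K1 K2] HP]] := hG ga gb E.
have key g : ([~ ga, g] \in N) = ([~ gb, Psi g] \in N).
  have [f [iso fa fg]] := HP g.
  have inj := isom_inj iso.
  have ia : ga \in <<[set ga; g]>> by rewrite mem_gen // !inE eqxx.
  have ig : g \in <<[set ga; g]>> by rewrite mem_gen // !inE eqxx orbT.
  apply: hN.
  rewrite -fa -fg -morphR // order_injm // groupR //.
have -> : [set g | [~ gb, g] \in N] = Psi @: [set g | [~ ga, g] \in N].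
  apply/setP => h; rewrite inE; apply/idP/imsetP => [H|[g]].
    by exists (Phi h); rewrite ?inE ?key K2.
  by rewrite inE key => H ->.
by rewrite card_imset //; apply: can_inj K1.
Qed.

Lemma pparts x y : #[coset N x] = #[coset N y] ->
  forall p, p \in \pi(#[coset N x]) -> #[x.`_p] = #[y.`_p].
Proof.
move=> E p pi_p.
have pr : prime p by move: pi_p; rewrite mem_primes => /and3P [].
have ex : #[coset N (x.`_p)] = (#[coset N x]`_p)%N by rewrite morph_constt ?inNN // order_constt.
have ey : #[coset N (y.`_p)] = (#[coset N x]`_p)%N by rewrite morph_constt ?inNN // order_constt E.
have pm : p %| #[coset N (x.`_p)] by rewrite ex p_part dvdn_exp // logn_gt0.
have E' : #[coset N (x.`_p)] = #[coset N (y.`_p)] by rewrite ex ey.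
have px := p_elt_constt p x; have py := p_elt_constt p y.
rewrite !order_constt !p_part.
case: (leqP (logn p #[x]) (logn p #[y])) => [le|/ltnW le].
  rewrite -!p_part -!order_constt; apply: (pcmp _ _ _ pr px py) => //.
  by rewrite !order_constt !p_part dvdn_exp2l.
rewrite -!p_part -!order_constt; apply/esym; apply: (pcmp _ _ _ pr py px) => //.
  by rewrite !order_constt !p_part dvdn_exp2l.
by rewrite -E'.
Qed.

Lemma parti x y : #[coset N x] = #[coset N y] ->
  (#[x]`_\pi(#[coset N x]) = #[y]`_\pi(#[coset N x]))%N.
Proof.
move=> E; apply: eq_partn_from_log => // p pi_p.
by rewrite -logn_part -(logn_part p #[y]) -!order_constt (pparts _ _ E _ pi_p).
Qed.
End S.

Theorem lemma3p5 (gT : finGroupType) (N : {group gT})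
  (hG : one_tuple_regular gT) (hN : union_of_order_classes N)
  (a b : coset_of N)
  (ha : a \in ([set: gT] / N)) (hb : b \in ([set: gT] / N))
  (hab : #[a] = #[b]) :
  (exists ga gb : gT, [/\ coset N ga = a, coset N gb = b & #[ga] = #[gb]])
  /\ #|a ^: ([set: gT] / N)| = #|b ^: ([set: gT] / N)|.
Proof.
have H1 : exists ga gb : gT, [/\ coset N ga = a, coset N gb = b & #[ga] = #[gb]].
  case/morphimP: ha => x _ _ Ea; case/morphimP: hb => y _ _ Eb.
  have {}hab : #[coset N x] = #[coset N y] by rewrite -Ea -Eb.
  rewrite Ea Eb.
  set pi := \pi(#[coset N x]).
  have pix : pi.-elt (coset N x) by apply: pnat_pi.
  have piy : pi.-elt (coset N y) by rewrite /pi hab; apply: pnat_pi.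
  exists (x.`_pi), (y.`_pi); split.
  - by rewrite morph_constt ?inNN // constt_p_elt.
  - by rewrite morph_constt ?inNN // constt_p_elt.
  by rewrite !order_constt (@parti gT N hN _ _ hab).
split => //; case: H1 => ga [gb [<- <- E]].
by rewrite !(@csize gT N hN) (@cnt gT N hN _ _ hG E).
Qed.
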